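(* Let $k\ge 1$ and $1\le k^*\le k$ be integers. For $r\in\{1,2\}$, run the Reduce-By-Median-Counter algorithm (defined in the context) with parameters $k,k^*$ on a weighted stream $\sigma_r$ of weighted length $N_r$, producing summary $S_r$. Let $\sigma=\sigma_1\circ\sigma_2$ be the concatenated stream, $N=N_1+N_2$, and $f_i$ the frequency of item $i$ in $\sigma$. Apply the merge procedure: for each item $i$ assigned a counter $c_2(i)$ in $S_2$ (in any order), call Update$(i,c_2(i))$ on $S_1$. Let $C$ be the sum of the counter values of the resulting summary and $\hat f_i$ its output of Estimate$(i)$. Then for every $i\in[m]$, $$0\le f_i-\hat f_i\le\frac{N-C}{k^*},$$ and moreover for every integer $0\le j<k^*$, $$0\le f_i-\hat f_i\le\frac{N^{\mathrm{res}(j)}}{k^*-j},$$ where $N^{\mathrm{res}(j)}$ is computed for $\sigma$.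
   Context: A weighted stream over the universe $[m]=\{1,\dots,m\}$ is a sequence of updates $(i_t,\Delta_t)$ with $i_t\in[m]$ and real weights $\Delta_t>0$; its weighted length is $\sum_t\Delta_t$. The frequency of $i$ in a stream is the sum of $\Delta_t$ over updates with $i_t=i$. $N^{\mathrm{res}(j)}$ denotes the sum of the frequencies of all items except the $j$ items of largest frequency (ties broken arbitrarily). The Reduce-By-Median-Counter algorithm with integer parameters $k\ge 1$ and $1\le k^*\le k$ maintains a set $T\subseteq[m]$ of at most $k$ items, each $j\in T$ carrying a nonnegative real counter $c(j)$; initially $T=\emptyset$. Update$(i,\Delta)$: if $i\in T$, set $c(i)\gets c(i)+\Delta$; else if $|T|<k$, add $i$ to $T$ with $c(i)=\Delta$; else call DecrementCounters(), and afterwards, if $\Delta\ge c_{k^*}$, add $i$ to $T$ with $c(i)=\Delta-c_{k^*}$. DecrementCounters(): let $c_{k^*}$ be the $k^*$-th largest value, counting multiplicity, of the multiset $\{c(j): j\in T\}$; for every $j\in T$ set $c(j)\gets c(j)-c_{k^*}$, and remove $j$ from $T$ if now $c(j)\le 0$. Estimate$(i)$ returns $c(i)$ if $i\in T$ and $0$ otherwise. *)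

(* Defs.v *)
From HB Require Import structures.
From mathcomp Require Import all_boot all_order all_algebra.
Set Implicit Arguments. Unset Strict Implicit. Unset Printing Implicit Defensive.
Import Order.TTheory GRing.Theory Num.Theory.
Local Open Scope ring_scope.

Section RBM.
Variables (R : realFieldType) (m : nat).

(* A summary: the set T of tracked items and their counters c (values of c
   outside T are irrelevant). *)
Record summary := Summary { sT : {set 'I_m}; sc : 'I_m -> R }.

Definition empty_summary : summary := Summary set0 (fun _ => 0).

Definition kth_largest (kstar : nat) (S : summary) : R :=
  nth 0 (sort (fun x y : R => y <= x) [seq sc S j | j <- enum (sT S)]) kstar.-1.

Definition setc (c : 'I_m -> R) (i : 'I_m) (v : R) : 'I_m -> R :=
  fun j => if j == i then v else c j.

Definition decrement (ck : R) (S : summary) : summary :=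
  Summary [set j in sT S | 0 < sc S j - ck] (fun j => sc S j - ck).

Definition update (k kstar : nat) (S : summary) (i : 'I_m) (d : R) : summary :=
  if i \in sT S then Summary (sT S) (setc (sc S) i (sc S i + d))
  else if (#|sT S| < k)%N then Summary (i |: sT S) (setc (sc S) i d)
  else
    let ck := kth_largest kstar S in
    let S' := decrement ck S in
    if ck <= d then Summary (i |: sT S') (setc (sc S') i (d - ck))
    else S'.

Definition estimate (S : summary) (i : 'I_m) : R :=
  if i \in sT S then sc S i else 0.

Definition counter_sum (S : summary) : R := \sum_(j in sT S) sc S j.

Definition stream := seq ('I_m * R).

Definition weighted_stream (s : stream) : Prop := all (fun u => 0 < u.2) s.

Definition rbm_run (k kstar : nat) (s : stream) : summary :=
  foldl (fun S u => update k kstar S u.1 u.2) empty_summary s.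

Definition wlength (s : stream) : R := \sum_(u <- s) u.2.

Definition freq (s : stream) (i : 'I_m) : R := \sum_(u <- s | u.1 == i) u.2.

Definition Nres (s : stream) (j : nat) : R :=
  \sum_(x <- drop j (sort (fun x y : R => y <= x) [seq freq s i | i <- enum 'I_m])) x.

Definition rbm_merge (k kstar : nat) (S1 S2 : summary) (ord : seq 'I_m) : summary :=
  foldl (fun S i => update k kstar S i (sc S2 i)) S1 ord.

End RBM.

(* Main.v *)
Require Import Defs.
From HB Require Import structures.
From mathcomp Require Import all_boot all_order all_algebra.
From mathcomp Require Import lra zify.
Import Order.TTheory GRing.Theory Num.Theory.
Set Implicit Arguments. Unset Strict Implicit. Unset Printing Implicit Defensive.
Local Open Scope ring_scope.

Definition err (R : realFieldType) (m : nat) (g : 'I_m -> R) (S : summary R m) x :=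
  g x - estimate S x.

Definition inv (R : realFieldType) (m kstar : nat) (D : R) (g : 'I_m -> R)
   (S : summary R m) : Prop :=
  [/\ 0 <= D, forall x, 0 <= err g S x, forall x, err g S x <= D,
      forall H : {set 'I_m}, (kstar - #|H|)%:R * D <= \sum_(x | x \notin H) err g S x
    & forall x, x \in sT S -> 0 <= sc S x].

Lemma inv_step (R : realFieldType) (m kstar : nat) D e g g' (S S' : summary R m) :
  inv kstar D g S -> 0 <= e ->
  (forall x, 0 <= err g' S' x - err g S x) ->
  (forall x, err g' S' x - err g S x <= e) ->
  (forall H : {set 'I_m}, (kstar - #|H|)%:R * e <= \sum_(x | x \notin H) (err g' S' x - err g S x)) ->
  (forall x, x \in sT S' -> 0 <= sc S' x) ->
  inv kstar (D + e) g' S'.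
Proof.
move=> [D0 e0 eD eH c0] e_ge0 d0 de dH c0'; split => //.
- by rewrite addr_ge0.
- by move=> x; have := e0 x; have := d0 x; lra.
- by move=> x; have := eD x; have := de x; lra.
- move=> H; rewrite mulrDr.
  have -> : \sum_(x | x \notin H) err g' S' x =
     \sum_(x | x \notin H) err g S x + \sum_(x | x \notin H) (err g' S' x - err g S x).
    by rewrite -big_split /=; apply: eq_bigr => x _; lra.
  by apply: lerD.
Qed.

Lemma delta_sum (R : realFieldType) (m kstar : nat) (d : 'I_m -> R) e (A : {set 'I_m}) :
  (forall x, 0 <= d x) -> (forall x, x \in A -> d x = e) -> 0 <= e ->
  (kstar <= #|A|)%N ->
  forall H : {set 'I_m}, (kstar - #|H|)%:R * e <= \sum_(x | x \notin H) d x.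
Proof.
move=> d0 dA e0 kA H.
have h1 : \sum_(x in A :\: H) d x <= \sum_(x | x \notin H) d x.
  rewrite [X in _ <= X](bigID (fun x => x \in A)) /= -[X in X <= _]addr0.
  apply: lerD; last by apply: sumr_ge0.
  rewrite le_eqVlt; apply/orP; left; apply/eqP; apply: eq_bigl => x; by rewrite in_setD andbC.
apply: le_trans h1.
rewrite (eq_bigr (fun _ => e)); last by move=> x; rewrite in_setD => /andP[_ /dA].
rewrite sumr_const -[e *+ _]mulr_natl. apply: ler_wpM2r => //. rewrite ler_nat.
rewrite cardsD; have := subsetIr A H => /subset_leq_card; lia.
Qed.
Lemma kth_props (R : realFieldType) (m kstar : nat) (S : summary R m) :
  (1 <= kstar)%N -> (kstar <= #|sT S|)%N -> (forall x, x \in sT S -> 0 <= sc S x) ->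
  0 <= kth_largest kstar S /\
  (kstar <= #|[set x in sT S | (kth_largest kstar S <= sc S x)%R]|)%N.
Proof.
move=> k1 kT c0.
set L := [seq sc S j | j <- enum (sT S)].
set sL := sort (fun x y : R => y <= x) L.
have psL : perm_eq sL L by rewrite /sL perm_sort.
have szL : size sL = #|sT S| by rewrite (perm_size psL) size_map -cardE.
have ck_def : kth_largest kstar S = nth 0 sL kstar.-1 by [].
set ck := kth_largest kstar S in ck_def *.
split.
  have : ck \in L.
    rewrite -(perm_mem psL) ck_def; apply: mem_nth; rewrite szL; lia.
  by case/mapP => x; rewrite mem_enum => /c0 h ->.
have srt : sorted (fun x y : R => y <= x) sL.
  apply: sort_sorted => x y; exact: le_total.
have tk : all (fun y => ck <= y) (take kstar sL).
  apply/(all_nthP 0) => n; rewrite size_take => hn.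
  have hn' : (n < kstar)%N by move: hn; rewrite szL; case: (ltnP kstar #|sT S|) => h; lia.
  rewrite nth_take // ck_def; have := szL.
  move=> _.
  have tr : transitive (fun x y : R => y <= x) by move=> a b c h1 h2; apply: le_trans h2 h1.
  have rf : reflexive (fun x y : R => y <= x) by move=> a; exact: lexx.
  apply: (sorted_leq_nth tr rf 0 srt); rewrite ?inE; lia.
have c1 : (kstar <= count (fun y => (ck <= y)%R) sL)%N.
  rewrite -(cat_take_drop kstar sL) count_cat.
  rewrite all_count in tk; move/eqP: tk => ->; rewrite size_take szL; case: (ltnP kstar #|sT S|) => h; lia.
rewrite (permP psL) count_map in c1.
apply: (leq_trans c1).
rewrite -size_filter -(card_uniqP (filter_uniq _ (enum_uniq (pred_of_set (sT S))))) .
apply: subset_leq_card; apply/subsetP => x.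
by rewrite mem_filter mem_enum inE /= andbC.
Qed.

Lemma inv_same (R : realFieldType) (m kstar : nat) D g g' (S S' : summary R m) :
  inv kstar D g S -> (forall x, err g' S' x = err g S x) ->
  (forall x, x \in sT S' -> 0 <= sc S' x) -> inv kstar D g' S'.
Proof.
move=> [D0 e0 eD eH c0] he c0'; split => //.
- by move=> x; rewrite he.
- by move=> x; rewrite he.
- by move=> H; rewrite (eq_bigr _ (fun x _ => he x)).
Qed.

Lemma inv_step2 (R : realFieldType) (m kstar : nat) D e g g' (S S' : summary R m) (A : {set 'I_m}) :
  inv kstar D g S -> 0 <= e -> (kstar <= #|A|)%N ->
  (forall x, 0 <= err g' S' x - err g S x) ->
  (forall x, err g' S' x - err g S x <= e) ->
  (forall x, x \in A -> err g' S' x - err g S x = e) ->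
  (forall x, x \in sT S' -> 0 <= sc S' x) ->
  inv kstar (D + e) g' S'.
Proof.
move=> I e0 kA d0 de dA c0; apply: (inv_step I) => //.
exact: (@delta_sum R m kstar (fun x => err g' S' x - err g S x) e A d0 dA e0 kA).
Qed.

Lemma update_inv (R : realFieldType) (m k kstar : nat) D g (S : summary R m) i d :
  (1 <= kstar)%N -> (kstar <= k)%N -> inv kstar D g S -> 0 <= d ->
  exists D', inv kstar D' (fun x => g x + (if i == x then d else 0)) (update k kstar S i d).
Proof.
move=> k1 kk [D0 e0 eD eH c0] d0.
have I : inv kstar D g S by split.
rewrite /update; case: ifP => iT.
  exists D; apply: (inv_same I).
    move=> x; rewrite /err /estimate /= /setc eq_sym.
    by case: (eqVneq i x) => [<-|]; rewrite ?iT //; try lra; move=> _; case: (x \in sT S); lra.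
  move=> x /= xT; rewrite /setc; case: (eqVneq x i) => [xi|_]; last exact: c0.
  by have := c0 i iT; lra.
case: ifP => cT.
  exists D; apply: (inv_same I).
    move=> x; rewrite /err /estimate /= /setc in_setU1 eq_sym.
    by case: (eqVneq i x) => [<-|]; rewrite ?iT //= ?addr0 ?subr0 ?addrK.
  move=> x /=; rewrite /setc in_setU1; case: (eqVneq x i) => [xi|_] /=; first by [].
  exact: c0.
have kT : (kstar <= #|sT S|)%N by move/negbT: cT; rewrite -leqNgt; lia.
have [ck0 cA] := kth_props k1 kT c0.
set ck := kth_largest kstar S in ck0 cA *.
set A := [set x in sT S | (ck <= sc S x)%R] in cA.
case: ifP => dck.
  exists (D + ck); apply: (inv_step2 I ck0 cA).
  - move=> x; rewrite /err /estimate /= /setc !inE eq_sym.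
    case: (eqVneq i x) => [<-|nix]; rewrite ?iT /=; first by lra.
    case: (boolP (x \in sT S)) => xT /=; last by lra.
    have := c0 x xT; case: ltrP; lra.
  - move=> x; rewrite /err /estimate /= /setc !inE eq_sym.
    case: (eqVneq i x) => [<-|nix]; rewrite ?iT /=; first by lra.
    case: (boolP (x \in sT S)) => xT /=; last by lra.
    have := c0 x xT; case: ltrP; lra.
  - move=> x; rewrite /A inE => /andP[xT hx].
    rewrite /err /estimate /= /setc !inE eq_sym xT.
    case: (eqVneq i x) => [ix|nix] /=; first by rewrite ix xT in iT.
    case: ltrP; lra.
  - move=> x /=; rewrite /setc !inE; case: (eqVneq x i) => [xi|nxi] /=; first by lra.
    by move=> /andP[_ h]; lra.
exists (D + ck); apply: (inv_step2 I ck0 cA).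
- move=> x; rewrite /err /estimate /= !inE eq_sym.
  case: (eqVneq i x) => [<-|nix]; rewrite ?iT /=; first by lra.
  case: (boolP (x \in sT S)) => xT /=; last by lra.
  have := c0 x xT; case: ltrP; lra.
- move=> x; rewrite /err /estimate /= !inE eq_sym.
  case: (eqVneq i x) => [<-|nix]; rewrite ?iT /=.
    by move/negbT: dck; rewrite -ltNge; lra.
  case: (boolP (x \in sT S)) => xT /=; last by lra.
  have := c0 x xT; case: ltrP; lra.
- move=> x; rewrite /A inE => /andP[xT hx].
  rewrite /err /estimate /= !inE eq_sym xT.
  case: (eqVneq i x) => [ix|nix] /=; first by rewrite ix xT in iT.
  case: ltrP; lra.
- by move=> x /=; rewrite !inE => /andP[_ h]; lra.
Qed.

Lemma inv_ext (R : realFieldType) (m kstar : nat) D g g' (S : summary R m) :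
  (forall x, g x = g' x) -> inv kstar D g S -> inv kstar D g' S.
Proof.
move=> hg I; apply: (inv_same I) => //; last by case: I.
by move=> x; rewrite /err hg.
Qed.

Lemma fold_inv (R : realFieldType) (m k kstar : nat) (T' : Type) (it : T' -> 'I_m)
  (w : T' -> R) (l : seq T') D g (S : summary R m) :
  (1 <= kstar)%N -> (kstar <= k)%N -> all (fun u => 0 <= w u) l -> inv kstar D g S ->
  exists D', inv kstar D' (fun x => g x + \sum_(u <- l | it u == x) w u)
     (foldl (fun S u => update k kstar S (it u) (w u)) S l).
Proof.
move=> k1 kk; elim: l D g S => [|u l IH] D g S /=.
  by move=> _ I; exists D; apply: (inv_ext _ I) => x; rewrite big_nil addr0.
move=> /andP[w0 wl] I.
have [D1 I1] := update_inv (it u) k1 kk I w0.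
have [D2 I2] := IH _ _ _ wl I1.
exists D2; apply: (inv_ext _ I2) => x; rewrite big_cons.
by case: (it u == x); rewrite ?add0r ?addr0 ?addrA.
Qed.

Lemma inv_add (R : realFieldType) (m kstar : nat) D D2 g g2 (S S2 : summary R m) :
  inv kstar D g S -> inv kstar D2 g2 S2 ->
  inv kstar (D + D2) (fun x => g x + err g2 S2 x) S.
Proof.
move=> [D0 e0 eD eH c0] [D20 e20 e2D e2H _].
have he : forall x, err (fun x => g x + err g2 S2 x) S x = err g S x + err g2 S2 x.
  by move=> x; rewrite /err; lra.
split => //.
- by rewrite addr_ge0.
- by move=> x; rewrite he addr_ge0.
- by move=> x; rewrite he lerD.
- move=> H; rewrite (eq_bigr _ (fun x _ => he x)) big_split /= mulrDr.
  by apply: lerD.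
Qed.

Lemma run_inv (R : realFieldType) (m k kstar : nat) (s : stream R m) :
  (1 <= kstar)%N -> (kstar <= k)%N -> weighted_stream s ->
  exists D, inv kstar D (freq s) (rbm_run k kstar s).
Proof.
move=> k1 kk ws.
have I0 : inv kstar 0 (fun _ => 0) (empty_summary R m).
  split.
  - by [].
  - by move=> x; rewrite /err /estimate /= inE subrr.
  - by move=> x; rewrite /err /estimate /= inE subrr.
  - move=> H; rewrite mulr0; apply: sumr_ge0 => x _.
    by rewrite /err /estimate /= inE subrr.
  - by move=> x; rewrite inE.
have wl : all (fun u : 'I_m * R => 0 <= u.2) s.
  by apply: sub_all ws => u /ltW.
have [D I] := @fold_inv R m k kstar _ fst snd s 0 (fun=> 0) _ k1 kk wl I0.
exists D; apply: (inv_ext _ I) => x; by rewrite add0r.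
Qed.

Lemma Nres_eq (R : realFieldType) (m : nat) (s : stream R m) j :
  exists H : {set 'I_m}, (#|H| <= j)%N /\ Nres s j = \sum_(x | x \notin H) freq s x.
Proof.
rewrite /Nres sort_map -map_drop big_map.
set E := sort _ (enum 'I_m).
have pE : perm_eq E (enum 'I_m) by rewrite /E perm_sort.
have uE : uniq E by rewrite (perm_uniq pE) enum_uniq.
exists [set x in take j E]; split.
  rewrite cardsE; apply: leq_trans (card_size _) _; rewrite size_take; case: ltnP; lia.
have -> : \sum_(x | x \notin [set x in take j E]) freq s x =
          \sum_(x <- enum 'I_m | x \notin [set x in take j E]) freq s x.
  by rewrite enumT; unlock.
rewrite -(perm_big _ pE) -{2}(cat_take_drop j E) big_cat /=.
rewrite [X in _ = X + _]big1_seq ?add0r; last first.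
  by move=> x /andP[]; rewrite inE => /negbTE ->.
move: uE; rewrite -{1}(cat_take_drop j E) cat_uniq => /and3P[_ hd _].
rewrite big_seq [RHS]big_seq_cond; apply: eq_bigl => x.
case xd : (x \in drop j E) => //=; rewrite inE.
by have := hasPn hd x xd.
Qed.

Lemma sum_freq (R : realFieldType) (m : nat) (s : stream R m) :
  \sum_x freq s x = wlength s.
Proof.
rewrite /freq /wlength.
under eq_bigr do rewrite big_mkcond.
rewrite exchange_big /=; apply: eq_bigr => u _.
rewrite -big_mkcond /=; apply: (big_pred1 u.1) => x /=; exact: eq_sym.
Qed.

Lemma sum_est (R : realFieldType) (m : nat) (S : summary R m) :
  \sum_x estimate S x = counter_sum S.
Proof. by rewrite /counter_sum [RHS]big_mkcond. Qed.

Theorem theorem9 (R : realFieldType) (m k kstar : nat)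
  (s1 s2 : stream R m) (ord : seq 'I_m) :
  (1 <= k)%N -> (1 <= kstar)%N -> (kstar <= k)%N ->
  weighted_stream s1 -> weighted_stream s2 ->
  perm_eq ord (enum (sT (rbm_run k kstar s2))) ->
  let S := rbm_merge k kstar (rbm_run k kstar s1) (rbm_run k kstar s2) ord in
  let s := s1 ++ s2 in
  let N := wlength s1 + wlength s2 in
  let C := counter_sum S in
  forall i : 'I_m,
    0 <= freq s i - estimate S i /\
    freq s i - estimate S i <= (N - C) / kstar%:R /\
    (forall j : nat, (j < kstar)%N ->
       freq s i - estimate S i <= Nres s j / (kstar - j)%:R).
Proof.
move=> _ k1 kk w1 w2 hord S s N C i.
have [D1 I1] := run_inv k1 kk w1.
have [D2 I2] := run_inv k1 kk w2.
pose S1 := rbm_run k kstar s1.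
pose S2 := rbm_run k kstar s2.
have w2l : all (fun u => 0 <= sc S2 u) ord.
  apply/allP => u; rewrite (perm_mem hord) mem_enum; case: I2 => _ _ _ _; exact.
have [Dm Im] := @fold_inv R m k kstar _ id (sc S2) ord D1 (freq s1) S1 k1 kk w2l I1.
have Ie : inv kstar Dm (fun x => freq s1 x + estimate S2 x) S.
  apply: (inv_ext _ Im) => x; congr (_ + _).
  rewrite (perm_big _ hord) /= /estimate.
  case: (boolP (x \in sT S2)) => xT.
    rewrite -big_filter filter_pred1_uniq ?enum_uniq ?mem_enum //.
    by rewrite big_seq1.
  rewrite big1_seq // => u /andP[/eqP -> ]; rewrite mem_enum (negbTE xT).
  by [].
have [D0 e0 eD eH c0] : inv kstar (Dm + D2) (freq s) S.
  apply: (inv_ext _ (inv_add Ie I2)) => x.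
  rewrite /s /freq big_cat /= /err -/(freq s1 x) -/(freq s2 x); lra.
have ei := eD i; rewrite /err in ei.
have kpos : (0 : R) < kstar%:R by rewrite ltr0n.
split; first exact: e0.
split.
  have := eH set0; rewrite cards0 subn0.
  have -> : \sum_(x | x \notin set0) err (freq s) S x = N - C.
    rewrite (eq_bigl xpredT); last by move=> x; rewrite inE.
    rewrite /err sumrB sum_est sum_freq /N /C /s /wlength big_cat.
    by [].
  move=> h; rewrite ler_pdivlMr //; apply: le_trans h.
  by rewrite [X in _ <= X]mulrC; apply: ler_wpM2r => //; apply: ltW.
move=> j jk.
have [H [Hj HN]] := Nres_eq s j.
have kjpos : (0 : R) < (kstar - j)%:R by rewrite ltr0n subn_gt0.
rewrite ler_pdivlMr //.
have h1 : \sum_(x | x \notin H) err (freq s) S x <= Nres s j.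
  rewrite HN; apply: ler_sum => x _; rewrite /err /estimate.
  case: ifP => xT; last by rewrite subr0.
  by have := c0 x xT; lra.
have h2 := eH H.
have h3 : (kstar - j)%:R * (Dm + D2) <= (kstar - #|H|)%:R * (Dm + D2).
  by apply: ler_wpM2r => //; rewrite ler_nat; lia.
have := ler_wpM2r (ltW kjpos) ei.
rewrite [_ * (kstar - j)%:R]mulrC.
move=> h4; rewrite [_ * (kstar - j)%:R]mulrC in h4; lra.
Qed.
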